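(* Let $\Delta$ be a nonempty $\Gamma$-semimodule. Then its dual satisfies $\Delta^*=(2\delta-1)-(\mathbb{Z}\setminus\Delta)=\{2\delta-1-x: x\in\mathbb{Z}\setminus\Delta\}$.
   Context: Let $m,n$ be coprime positive integers, $\Gamma=\{am+bn:a,b\in\mathbb{Z}_{\ge0}\}$ and $\delta=\frac{(m-1)(n-1)}2$. A $\Gamma$-semimodule is a subset $\Delta\subset\mathbb{Z}_{\ge0}$ with $\Delta+\Gamma\subset\Delta$. The dual semimodule is $\Delta^*=\{\varphi\in\mathbb{Z}:\varphi+\Delta\subset\Gamma\}$. *)

(* Defs.v *)
From Stdlib Require Export ZArith Lia.
Open Scope Z_scope.

Definition Gamma (m n : Z) (x : Z) : Prop :=
  exists a b : Z, 0 <= a /\ 0 <= b /\ x = a * m + b * n.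

Definition delta (m n : Z) : Z := ((m - 1) * (n - 1)) / 2.

Definition is_semimodule (m n : Z) (D : Z -> Prop) : Prop :=
  (forall x, D x -> 0 <= x) /\
  (forall x g, D x -> Gamma m n g -> D (x + g)).

Definition dual (m n : Z) (D : Z -> Prop) : Z -> Prop :=
  fun phi => forall d, D d -> Gamma m n (phi + d).

(* Main.v *)
Require Import Defs.
From Stdlib Require Import ZArith Znumtheory Lia.

Lemma not_both m n x : 0 < m -> 0 < n -> Z.gcd m n = 1 ->
  Gamma m n x -> Gamma m n ((m-1)*(n-1) - 1 - x) -> False.
Proof.
  intros Hm Hn Hg [a [b [Ha [Hb Hx]]]] [a' [b' [Ha' [Hb' Hx']]]].
  assert (E : (a+a'+1)*m + (b+b'+1)*n = m*n) by lia.
  assert (D1 : (m | (b+b'+1))).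
  { apply Z.gauss with n. exists (n - (a+a'+1)). lia.
    exact Hg. }
  assert (D2 : (n | (a+a'+1))).
  { apply Z.gauss with m. exists (m - (b+b'+1)). lia.
    rewrite Z.gcd_comm; exact Hg. }
  apply Z.divide_pos_le in D1; [|lia].
  apply Z.divide_pos_le in D2; [|lia].
  nia.
Qed.

Lemma one_of m n x : 0 < m -> 0 < n -> Z.gcd m n = 1 ->
  Gamma m n x \/ Gamma m n ((m-1)*(n-1) - 1 - x).
Proof.
  intros Hm Hn Hg.
  assert (HB : Bezout m n 1).
  { apply Zis_gcd_bezout. rewrite <- Hg. apply Zgcd_is_gcd. }
  destruct HB as [u v Huv].
  set (b := (x*v) mod m).
  assert (Hb : 0 <= b < m) by (apply Z.mod_pos_bound; lia).
  assert (Hq : x*v = m * ((x*v)/m) + b) by (apply Z.div_mod; lia).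
  set (q := (x*v)/m) in *.
  set (a := x*u + q*n).
  assert (Hx : x = a*m + b*n).
  { subst a. assert (x = x*(u*m+v*n)) by (rewrite Huv; ring). nia. }
  destruct (Z_le_gt_dec 0 a).
  - left. exists a, b. lia.
  - right. exists (-1-a), (m-1-b). split; [lia|split;[lia|]]. rewrite Hx. ring.
Qed.

Lemma two_delta m n : 0 < m -> 0 < n -> Z.gcd m n = 1 ->
  2 * delta m n = (m-1)*(n-1).
Proof.
  intros Hm Hn Hg. unfold delta.
  assert (Hm2 := Z.div_mod m 2 ltac:(lia)).
  assert (Hn2 := Z.div_mod n 2 ltac:(lia)).
  assert (Bm := Z.mod_pos_bound m 2 ltac:(lia)).
  assert (Bn := Z.mod_pos_bound n 2 ltac:(lia)).
  assert (Hev : ((m-1)*(n-1)) mod 2 = 0).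
  { destruct (Z.eq_dec (m mod 2) 0) as [E1|E1];
    destruct (Z.eq_dec (n mod 2) 0) as [E2|E2].
    - exfalso.
      assert (H2 : (2 | Z.gcd m n)).
      { apply Z.gcd_greatest; [exists (m/2)|exists (n/2)]; lia. }
      rewrite Hg in H2. apply Z.divide_pos_le in H2; lia.
    - symmetry; apply Z.mod_unique with ((m-1)*(n/2)); [lia|].
      assert (n mod 2 = 1) by lia. nia.
    - symmetry; apply Z.mod_unique with ((m/2)*(n-1)); [lia|].
      assert (m mod 2 = 1) by lia. nia.
    - assert (m mod 2 = 1) by lia. assert (n mod 2 = 1) by lia.
      symmetry; apply Z.mod_unique with ((m/2)*(n-1)); [lia|]. nia. }
  assert (H := Z.div_mod ((m-1)*(n-1)) 2 ltac:(lia)). lia.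
Qed.

Theorem mainTheorem9 (m n : Z) (D : Z -> Prop) :
  0 < m -> 0 < n -> Z.gcd m n = 1 ->
  is_semimodule m n D ->
  (exists x, D x) ->
  forall phi : Z,
    dual m n D phi <-> exists x : Z, ~ D x /\ phi = 2 * delta m n - 1 - x.
Proof.
  intros Hm Hn Hg [Hpos Hsm] _ phi.
  rewrite (two_delta m n Hm Hn Hg).
  split.
  - intros Hd. exists ((m-1)*(n-1) - 1 - phi). split; [|lia].
    intros HD. apply Hd in HD.
    apply (not_both m n 0 Hm Hn Hg).
    + exists 0, 0. lia.
    + replace ((m-1)*(n-1)-1-0) with (phi + ((m-1)*(n-1)-1-phi)) by ring. exact HD.
  - intros [x [Hx ->]] d Hdd.
    destruct (one_of m n (((m-1)*(n-1)-1-x) + d) Hm Hn Hg) as [G|G]; [exact G|].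
    exfalso. apply Hx.
    replace x with (d + ((m - 1) * (n - 1) - 1 - ((m - 1) * (n - 1) - 1 - x + d))) by ring.
    apply Hsm; assumption.
Qed.
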